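(* For any $F$-weighted boundary stratum $\mathcal{S}$, the cone $C(\mathcal{S})\subset\mathbf{S}_{\mathbb{Q}}(F)$ strictly contains the subspace $N(\mathcal{S})$.
   Context: $F$ is a totally real number field of degree $g$ with trace pairing $\langle x,y\rangle=\mathrm{Tr}_{F/\mathbb{Q}}(xy)$. An $F$-weighted stable curve is a stable curve of arithmetic genus $g$ and geometric genus $0$ with an element of a lattice $\mathcal{I}\subset F$ (rank $g$ additive subgroup) attached to each branch at each node, such that the two branches at a node have opposite weights, the weights on each component sum to zero, and the weights span $\mathcal{I}$. An $F$-weighted boundary stratum $\mathcal{S}$ is the moduli space of weighted stable curves topologically equivalent (weight-preservingly) to a fixed one; its weights are those of its nodes. $\mathrm{Sym}_{\mathbb{Q}}(F)\subset F\otimes_{\mathbb{Q}}F$ is the subspace of symmetric tensors, $\mathbf{S}_{\mathbb{Q}}(F)$ the quotient of $F\otimes_{\mathbb{Q}}F$ by the span of $x\otimes y-y\otimes x$, dual via $\langle a\otimes b,c\otimes d\rangle=\langle a,c\rangle\langle b,d\rangle$. $N(\mathcal{S})\subset\mathbf{S}_{\mathbb{Q}}(F)$ is the annihilator of the span of $\{r\otimes r: r\text{ a weight of }\mathcal{S}\}$, and $C(\mathcal{S})=\{x\in\mathbf{S}_{\mathbb{Q}}(F):\langle x,r\otimes r\rangle\geq 0\text{ for each weight } r\text{ of }\mathcal{S}\}$. *)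

(* Defs.v *)
From HB Require Import structures.
From mathcomp Require Import all_boot all_order all_algebra all_field.
Set Implicit Arguments. Unset Strict Implicit. Unset Printing Implicit Defensive.
Import Order.TTheory GRing.Theory Num.Theory.
Local Open Scope ring_scope.

(* The number field F is modelled as a finite-dimensional field extension
   F : fieldExtType rat; its degree over Q is g := \dim {:F}. *)

Section FieldData.
Variable F : fieldExtType rat.

Definition totally_real : Prop :=
  forall (s : {rmorphism F -> algC}) (x : F), s x \is Num.real.

Definition fbasis := vbasis (fullv : {vspace F}).
Definition fb (i : 'I_(\dim {:F})) : F := tnth fbasis i.

(* Tr_{F/Q}(x) = trace of the Q-linear map y |-> x y *)
Definition trF (x : F) : rat :=
  \sum_(i < \dim {:F}) coord fbasis i (x * fb i).

Definition trpair (x y : F) : rat := trF (x * y).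

(* F (x)_Q F, in coordinates w.r.t. the basis fb (x) fb:
   x = \sum_ij x i j fb i (x) fb j *)
Definition tensF := 'M[rat]_(\dim {:F}).

Definition tens (a b : F) : tensF :=
  \matrix_(i, j) (coord fbasis i a * coord fbasis j b).

(* bilinear pairing on F (x) F extending <a(x)b, c(x)d> = <a,c><b,d>;
   it descends to the duality between S_Q(F) and Sym_Q(F). *)
Definition tpair (x y : tensF) : rat :=
  \sum_(i < \dim {:F}) \sum_(j < \dim {:F}) \sum_(k < \dim {:F})
    \sum_(l < \dim {:F})
    x i j * y k l * trpair (fb i) (fb k) * trpair (fb j) (fb l).

(* the subspace of F (x) F spanned by the antisymmetric tensors
   x (x) y - y (x) x; S_Q(F) is the quotient by it *)
Definition antisymF : {vspace tensF} :=
  (\sum_(i < \dim {:F}) \sum_(j < \dim {:F})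
     <[tens (fb i) (fb j) - tens (fb j) (fb i)]>)%VS.

Definition SQ_eq (x y : tensF) : Prop := (x - y) \in antisymF.

(* a lattice I in F: the Z-span of a Q-basis b of F *)
Definition is_lattice_basis (b : seq F) : Prop :=
  size b = \dim {:F} /\ free b.

Definition in_zspan (s : seq F) (x : F) : Prop := inIntSpan (in_tuple s) x.

End FieldData.

(* Combinatorial (dual graph) description of an F-weighted stable curve of
   arithmetic genus g and geometric genus 0 (all components rational, no
   marked points):
   - V : irreducible components, H : branches at nodes (half-edges);
   - vtx h : the component on which the branch h lies;
   - inv : fixed-point-free involution pairing the two branches of a node
     (inv h may lie on the same component: self-nodes allowed);
   - w h : weight in F attached to the branch h. *)
Section Curve.
Variables (F : fieldExtType rat) (V H : finType).
Variables (vtx : H -> V) (inv : H -> H) (w : H -> F).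

Definition adjV : rel V :=
  fun x y => [exists h, (vtx h == x) && (vtx (inv h) == y)].

Definition stable_genus0_graph : Prop :=
  (0 < #|V|)%N /\
  [/\
      (forall h, inv (inv h) = h), (forall h, inv h != h),
      (forall x y, connect adjV x y),
      (* stability of each rational component: at least 3 special points *)
      (forall x, 3 <= #|[set h | vtx h == x]|)%N &
      (* arithmetic genus = #nodes - #components + 1 = g *)
      (#|H| + 2 = 2 * (#|V| + \dim {:F}))%N].

Definition F_weighted_stable_curve (b : seq F) : Prop :=
  [/\ stable_genus0_graph,
      (forall h, w (inv h) = - w h),
      (forall x, \sum_(h | vtx h == x) w h = 0) &
      (forall z, in_zspan [seq w h | h <- enum H] z <-> in_zspan b z)].

Definition weight_squares_span : {vspace tensF F} :=
  (\sum_(h : H) <[tens (w h) (w h)]>)%VS.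

(* N(S): annihilator of the span of the r (x) r (as a predicate on
   representatives in F (x) F of elements of S_Q(F)) *)
Definition N_S (x : tensF F) : Prop :=
  forall y, y \in weight_squares_span -> tpair x y = 0.

Definition C_S (x : tensF F) : Prop :=
  forall h : H, 0 <= tpair x (tens (w h) (w h)).

End Curve.

(* Main.v *)
Require Import Defs.
From HB Require Import structures.
From mathcomp Require Import all_boot all_order all_algebra all_field.
From mathcomp Require Import ring.
Import Order.TTheory GRing.Theory Num.Theory.
Local Open Scope ring_scope.

Section Aux.
Variable F : fieldExtType rat.
Local Notation n := (\dim {:F}).

Lemma fexpand (a : F) : a = \sum_(i < n) coord (fbasis F) i a *: fb i.
Proof.
rewrite {1}(coord_vbasis (memvf a)); apply: eq_bigr => i _.
by rewrite /fb (tnth_nth 0).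
Qed.

Lemma trF_add (x y : F) : trF (x + y) = trF x + trF y.
Proof. by rewrite /trF -big_split; apply: eq_bigr => i _; rewrite mulrDl linearD. Qed.

Lemma trF0 : trF (0 : F) = 0.
Proof. by rewrite /trF big1 // => i _; rewrite mul0r linear0. Qed.

Lemma trFZ (c : rat) (x : F) : trF (c *: x) = c * trF x.
Proof. by rewrite /trF mulr_sumr; apply: eq_bigr => i _; rewrite -scalerAl linearZ. Qed.

Lemma trF_sum (I : Type) (r : seq I) (P : pred I) (f : I -> F) :
  trF (\sum_(i <- r | P i) f i) = \sum_(i <- r | P i) trF (f i).
Proof. exact: (big_morph _ trF_add trF0). Qed.

Lemma trpair_expand (a c : F) : trpair a c =
  \sum_(i < n) \sum_(k < n) (coord (fbasis F) i a * coord (fbasis F) k c) * trpair (fb i) (fb k).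
Proof.
rewrite /trpair {1}(fexpand a) {1}(fexpand c) mulr_suml trF_sum.
apply: eq_bigr => i _; rewrite mulr_sumr trF_sum; apply: eq_bigr => k _.
by rewrite -scalerAl -scalerAr trFZ trFZ mulrA [_ * coord _ _ _]mulrC.
Qed.

Lemma tpair_tens (a b c d : F) :
  tpair (tens a b) (tens c d) = trpair a c * trpair b d.
Proof.
rewrite (trpair_expand a c) (trpair_expand b d) /tpair mulr_suml.
apply: eq_bigr => i _.
rewrite exchange_big /= mulr_suml; apply: eq_bigr => k _.
rewrite mulr_sumr; apply: eq_bigr => j _.
rewrite mulr_sumr; apply: eq_bigr => l _.
rewrite !mxE; ring.
Qed.

Lemma trF1 : trF (1 : F) = n%:R.
Proof.
rewrite /trF (eq_bigr (fun _ => 1)) ?sumr_const ?card_ord //.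
move=> i _; rewrite mul1r /fb (tnth_nth 0) coord_free ?eqxx //.
exact: basis_free (vbasisP _).
Qed.

Lemma zspan_mem (s : seq F) (i0 : 'I_(size s)) :
  in_zspan s s`_i0.
Proof.
exists [ffun i => ((i == i0) : nat)%:Z].
rewrite (bigD1 i0) //= ffunE eqxx mulr1z big1 ?addr0 //.
by move=> i /negbTE Hi; rewrite ffunE Hi mulr0z.
Qed.

End Aux.

Theorem corollary3p2 (F : fieldExtType rat) (F_totally_real : totally_real F)
  (b : seq F) (Ib : is_lattice_basis b)
  (V H : finType) (vtx : H -> V) (inv : H -> H) (w : H -> F)
  (curve : F_weighted_stable_curve vtx inv w b) :
  (* N(S) is contained in C(S) (as subsets of S_Q(F)) *)
  (forall x, N_S w x -> C_S w x) /\
  (* and the containment is strict: some element of S_Q(F) lies in C(S)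
     but not in N(S) *)
  (exists x : tensF F, C_S w x /\ ~ N_S w x).
Proof.
have inspan : forall h, tens (w h) (w h) \in weight_squares_span w.
  move=> h; apply: (subvP (sumv_sup h (P:=xpredT) isT (subvv _))); exact: memv_line.
split.
  by move=> x HN h; rewrite HN.
case: curve => _ _ _ Hspan.
case: Ib => sb fb'.
have n0 : (0 < size b)%N by rewrite sb; exact: (adim_gt0 (aspacef F)).
pose i0 : 'I_(size b) := Ordinal n0.
have b0 : b`_i0 != 0.
  apply/negP => /eqP E.
  move: fb'; rewrite free_directv => /andP [+ _].
  by rewrite -E mem_nth.
have [h0 Hh0 | Hnone] := pickP (fun h => w h != 0); last first.
  exfalso; have := (proj2 (Hspan b`_i0)) (@zspan_mem F b i0).
  case=> a Ea; move: b0; rewrite Ea big1 ?eqxx // => i _.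
  have /mapP [h _ ->] : (in_tuple [seq w h | h <- enum H])`_i \in [seq w h | h <- enum H].
    exact: mem_nth.
  by have := Hnone h => /= /negbFE /eqP ->; rewrite mul0rz.
set r := w h0.
exists (tens r^-1 r^-1); split.
  by move=> h; rewrite tpair_tens -expr2 sqr_ge0.
move=> HN; have := HN _ (inspan h0).
rewrite tpair_tens /trpair mulVf // trF1.
apply/eqP; rewrite mulf_neq0 // pnatr_eq0 -lt0n; exact: (adim_gt0 (aspacef F)).
Qed.
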